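(* Let $R$ be a commutative ring with unit. If a discrete group $G$ has periodic cohomology over $R$ starting in dimension $k+1$, then $G$ has jump cohomology of height $k$ over $R$, i.e. every subgroup $H\le G$ with $cd_R(H)<\infty$ satisfies $cd_R(H)\le k$.
   Context: $cd_R(G)=\inf\{n:\operatorname{Ext}^i_{RG}(R,-)=0 \text{ for } i>n\}$. $G$ has periodic cohomology over $R$ starting in dimension $n$ if there is $\alpha\in\operatorname{Ext}^*_{RG}(R,R)$ with $|\alpha|>0$ such that $\alpha\cup-:\operatorname{Ext}^i_{RG}(R,M)\to\operatorname{Ext}^{i+|\alpha|}_{RG}(R,M)$ is an isomorphism for every $RG$-module $M$ and every $i\ge n$. $G$ has jump cohomology of height $k$ over $R$ if every subgroup $H$ with $cd_R(H)<\infty$ has $cd_R(H)\le k$. *)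

(* Defs.v *)
(* Group cohomology of a discrete (possibly infinite) group
   via the standard inhomogeneous cochain complex:
   Ext^i_{RG}(R, M) = H^i(G; M). *)
From HB Require Import structures.
From mathcomp Require Import all_boot all_algebra.
Set Implicit Arguments. Unset Strict Implicit. Unset Printing Implicit Defensive.
Import GRing.Theory.
Local Open Scope ring_scope.

Record group := Group {
  gcar :> Type;
  gmul : gcar -> gcar -> gcar;
  ginv : gcar -> gcar;
  gone : gcar;
  gmulA : forall x y z, gmul x (gmul y z) = gmul (gmul x y) z;
  gmul1 : forall x, gmul gone x = x;
  gmulV : forall x, gmul (ginv x) x = gone
}.

Definition is_subgroup (G : group) (H : G -> Prop) : Prop :=
  [/\ H (gone G), (forall x y, H x -> H y -> H (gmul x y))
    & (forall x, H x -> H (ginv x))].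

Definition whole (G : group) : G -> Prop := fun _ => True.

Definition all_in (G : group) (H : G -> Prop) (s : seq G) : Prop :=
  forall i, (i < size s)%N -> H (nth (gone G) s i).

Definition gprod (G : group) (s : seq G) : G := foldr (@gmul G) (gone G) s.

Definition is_module_action (R : comPzRingType) (G : group) (H : G -> Prop)
  (M : lmodType R) (act : G -> M -> M) : Prop :=
  [/\ (forall g a (x y : M), H g -> act g (a *: x + y) = a *: act g x + act g y),
      (forall x, act (gone G) x = x)
    & (forall g h x, H g -> H h -> act (gmul g h) x = act g (act h x))].

Definition merge_at (G : group) (i : nat) (s : seq G) : seq G :=
  take i s ++ gmul (nth (gone G) s i) (nth (gone G) s i.+1) :: drop i.+2 s.

(* standard coboundary of an inhomogeneous cochain f : G^n -> M,
   evaluated at s = (g1, ..., g_{n+1}) *)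
Definition dcob (R : comPzRingType) (G : group) (M : lmodType R)
  (act : G -> M -> M) (f : seq G -> M) (s : seq G) : M :=
  match s with
  | [::] => 0
  | g :: t =>
      act g (f t)
      + \sum_(i < (size s).-1) ((-1) ^+ i.+1) *: f (merge_at i s)
      + ((-1) ^+ size s) *: f (take (size s).-1 s)
  end.

Definition cocycle (R : comPzRingType) (G : group) (H : G -> Prop)
  (M : lmodType R) (act : G -> M -> M) (n : nat) (f : seq G -> M) : Prop :=
  forall s, size s = n.+1 -> all_in H s -> dcob act f s = 0.

Definition coboundary (R : comPzRingType) (G : group) (H : G -> Prop)
  (M : lmodType R) (act : G -> M -> M) (n : nat) (f : seq G -> M) : Prop :=
  match n with
  | 0 => f [::] = 0
  | _.+1 => exists h : seq G -> M,
      forall s, size s = n -> all_in H s -> f s = dcob act h s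
  end.

Definition coh_vanishes (R : comPzRingType) (G : group) (H : G -> Prop)
  (M : lmodType R) (act : G -> M -> M) (n : nat) : Prop :=
  forall f, cocycle H act n f -> coboundary H act n f.

Definition cd_le (R : comPzRingType) (G : group) (H : G -> Prop) (k : nat) : Prop :=
  forall (M : lmodType R) (act : G -> M -> M), is_module_action H act ->
  forall i, (k < i)%N -> coh_vanishes H act i.

Definition cd_finite (R : comPzRingType) (G : group) (H : G -> Prop) : Prop :=
  exists k, cd_le R H k.

Definition triv_act (R : comPzRingType) (G : group) : G -> R^o -> R^o :=
  fun _ x => x.

Definition cup (R : comPzRingType) (G : group) (M : lmodType R)
  (act : G -> M -> M) (q : nat) (alpha : seq G -> R) (f : seq G -> M) :
  seq G -> M :=
  fun s => alpha (take q s) *: act (gprod (take q s)) (f (drop q s)).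

(* alpha u - : H^i(G;M) -> H^{i+q}(G;M) is a bijection *)
Definition cup_iso (R : comPzRingType) (G : group) (M : lmodType R)
  (act : G -> M -> M) (q : nat) (alpha : seq G -> R) (i : nat) : Prop :=
  (forall f, cocycle (@whole G) act i f ->
     coboundary (@whole G) act (i + q) (cup act q alpha f) ->
     coboundary (@whole G) act i f)
  /\
  (forall z, cocycle (@whole G) act (i + q) z ->
     exists f, cocycle (@whole G) act i f /\
       coboundary (@whole G) act (i + q) (fun s => z s - cup act q alpha f s)).

Definition periodic_from (R : comPzRingType) (G : group) (n : nat) : Prop :=
  exists (q : nat) (alpha : seq G -> R),
    (0 < q)%N /\ cocycle (@whole G) (@triv_act R G) q alpha /\
    forall (M : lmodType R) (act : G -> M -> M),
      is_module_action (@whole G) act ->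
      forall i, (n <= i)%N -> cup_iso act q alpha i.

Definition jump_height (R : comPzRingType) (G : group) (k : nat) : Prop :=
  forall H : G -> Prop, is_subgroup H -> cd_finite R H -> cd_le R H k.

(* Main.v *)
From HB Require Import structures.
Require Import Defs.
From mathcomp Require Import all_boot all_algebra ssrAC.
From mathcomp Require Import boolp zify.
From Stdlib Require Import ProofIrrelevance ClassicalEpsilon.
Set Implicit Arguments. Unset Strict Implicit. Unset Printing Implicit Defensive.
Import GRing.Theory.
Local Open Scope ring_scope.


Section GroupLists.
Variable G : group.
Local Notation "x ** y" := (@gmul G x y) (at level 40, left associativity).
Local Notation "x ^^-1" := (@ginv G x) (at level 3).
Local Notation e := (gone G).

Lemma mulgA' (x y z : G) : x ** (y ** z) = (x ** y) ** z. Proof. exact: gmulA. Qed.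
Lemma mul1g' (x : G) : e ** x = x. Proof. exact: gmul1. Qed.
Lemma mulVg' (x : G) : x^^-1 ** x = e. Proof. exact: gmulV. Qed.

Lemma mulKg' (x y : G) : x^^-1 ** (x ** y) = y.
Proof. by rewrite mulgA' mulVg' mul1g'. Qed.
Lemma mulg_injl (x y z : G) : x ** y = x ** z -> y = z.
Proof. by move=> E; rewrite -(mulKg' x y) E mulKg'. Qed.
Lemma mulgV' (x : G) : x ** x^^-1 = e.
Proof.
rewrite -[LHS]mul1g' -{1}(mulVg' (x^^-1)) -mulgA' (mulgA' (x^^-1) x) mulVg'.
by rewrite mul1g' mulVg'.
Qed.
Lemma mulg1' (x : G) : x ** e = x.
Proof. by rewrite -(mulVg' x) mulgA' mulgV' mul1g'. Qed.
Lemma mulKVg' (x y : G) : x ** (x^^-1 ** y) = y.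
Proof. by rewrite mulgA' mulgV' mul1g'. Qed.
Lemma inv1' : e^^-1 = e.
Proof. by rewrite -{2}(mulVg' e) mulg1'. Qed.
Lemma invMg' (x y : G) : (x ** y)^^-1 = y^^-1 ** x^^-1.
Proof.
apply: (@mulg_injl (x ** y)). rewrite mulgV' -mulgA' (mulgA' y) mulgV' mul1g'.
by rewrite mulgV'.
Qed.
Lemma invdiff (h a b : G) : (h ** a)^^-1 ** (h ** b) = a^^-1 ** b.
Proof. by rewrite invMg' -mulgA' (mulgA' (h^^-1)) mulVg' mul1g'. Qed.

Fixpoint pp (x : G) (s : seq G) : seq G :=
  if s is g :: t then x :: pp (x ** g) t else [:: x].

Fixpoint dif (y : seq G) : seq G :=
  match y with
  | a :: ((b :: _) as y') => (a^^-1 ** b) :: dif y'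
  | _ => [::]
  end.

Definition hd0 (y : seq G) : G := head e y.

Definition del (i : nat) (y : seq G) : seq G := take i y ++ drop i.+1 y.

Lemma size_pp x s : size (pp x s) = (size s).+1.
Proof. by elim: s x => [|g t IH] x //=; rewrite IH. Qed.

Lemma dif_pp x s : dif (pp x s) = s.
Proof.
elim: s x => [|g t IH] x //=.
by case: t IH => [|g' t'] IH /=; rewrite mulKg' //; congr (_ :: _); exact: IH.
Qed.

Lemma hd0_pp x s : hd0 (pp x s) = x.
Proof. by case: s. Qed.

Lemma pp_dif y : y <> [::] -> pp (hd0 y) (dif y) = y.
Proof.
elim: y => [|a y IH] //= _.
case: y IH => [|b y'] IH //=.
by rewrite mulKVg' IH.
Qed.

Lemma size_dif y : size (dif y) = (size y).-1.
Proof. by elim: y => [|a [|b y] IH] //=; rewrite IH. Qed.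

Lemma pp_mul h x s : pp (h ** x) s = map (gmul h) (pp x s).
Proof. by elim: s x => [|g t IH] x //=; rewrite -mulgA' IH. Qed.

Lemma dif_map h y : dif (map (gmul h) y) = dif y.
Proof. by elim: y => [|a [|b y] IH] //=; rewrite invdiff; congr (_ :: _); exact: IH. Qed.

Lemma hd0_map (f : G -> G) y : y <> [::] -> hd0 (map f y) = f (hd0 y).
Proof. by case: y. Qed.

Lemma del_pp_merge i s x : (i.+1 < size s)%N ->
  del i.+1 (pp x s) = pp x (merge_at i s).
Proof.
elim: i s x => [|i IH] [|g [|g' t]] x //= Hi.
- by rewrite /del /= drop0 /merge_at /= drop0 mulgA'.
- rewrite /merge_at /=.
  have := IH (g' :: t) (x ** g) Hi. rewrite /del /= => ->.
  by rewrite /merge_at.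
Qed.

Lemma del_pp_last s x : s <> [::] ->
  del (size s) (pp x s) = pp x (take (size s).-1 s).
Proof.
elim: s x => [|g t IH] x //= _.
case: t IH => [|g' t] IH.
  by rewrite /del /=.
have := IH (x ** g) (fun E : g' :: t = [::] => ltac:(discriminate E)). rewrite /del /= => ->. done.
Qed.

Lemma del0_pp g t x : del 0 (pp x (g :: t)) = pp (x ** g) t.
Proof. by rewrite /del /= drop0. Qed.

Lemma take_pp n s x : take n.+1 (pp x s) = pp x (take n s).
Proof.
elim: n s x => [|n IH] [|g t] x //=; first by case: t.
by rewrite IH.
Qed.

Lemma take_dif q y : take q (dif y) = dif (take q.+1 y).
Proof.
elim: q y => [|q IH] [|a [|b y]] //=.
by congr (_ :: _); exact: (IH (b :: y)).
Qed.

Lemma drop_dif q y : drop q (dif y) = dif (drop q y).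
Proof.
elim: q y => [|q IH] [|a [|b y]] //=.
exact: (IH (b :: y)).
Qed.

Lemma hd0_drop q y : (q < size y)%N ->
  hd0 (drop q y) = hd0 y ** gprod (take q (dif y)).
Proof.
elim: q y => [|q IH] [|a [|b y]] //=.
- by rewrite mulg1'.
- by rewrite mulg1'.
- move=> Hq. rewrite (IH (b :: y)) //= mulgA' mulKVg'. done.
Qed.

End GroupLists.


Section Homog.
Variable G : group.

Fixpoint hd (V : zmodType) (Psi : seq G -> V) (y : seq G) {struct y} : V :=
  if y is a :: y' then Psi y' - hd (fun z => Psi (a :: z)) y' else 0.

Fixpoint T (eta : G -> G) (V : zmodType) (Psi : seq G -> V) (y : seq G) {struct y} : V :=
  if y is a :: y' then Psi (eta a :: a :: y') - T eta (fun z => Psi (eta a :: z)) y'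
  else 0.

Lemma zid1 (V : zmodType) (A B C D : V) : (A - B) - (C - D) = (A - C) - (B - D).
Proof. by rewrite !opprB addrACA [in RHS]addrACA (addrC (-B)). Qed.
Lemma zid2 (V : zmodType) (TP X1 X2 X3 Q0 Q1 Q2 : V) : X2 + X3 = Q0 - Q1 ->
  (TP - (X1 - X2)) + ((Q2 - (Q0 - X1)) - (TP - X3)) = Q2 - Q1.
Proof.
move=> E. have -> : Q0 = X2 + X3 + Q1 by rewrite E addrNK.
rewrite !opprB !opprD ?opprK !addrA.
by rewrite (@GRing.add V).[ACl ((4*8) * ((1*10)*(2*6)*(5*3)*(9*7)))] !subrr !addr0.
Qed.

Section Z.
Variable V : zmodType.

Lemma hd_ext n (P1 P2 : seq G -> V) :
  (forall z, size z = n -> P1 z = P2 z) ->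
  forall y, size y = n.+1 -> hd P1 y = hd P2 y.
Proof.
elim: n P1 P2 => [|n IH] P1 P2 E [|a y] //= [Hy].
  by case: y Hy => // _; rewrite E.
by rewrite E // (IH (fun z => P1 (a :: z)) (fun z => P2 (a :: z))) // => z Hz; apply: E => /=; rewrite Hz.
Qed.

Lemma hd_lin (W : zmodType) (f : V -> W) (P : seq G -> V) y :
  (forall a b, f (a - b) = f a - f b) -> hd (fun z => f (P z)) y = f (hd P y).
Proof.
move=> Hf.
have f0 : f 0 = 0 by rewrite -(subrr 0) Hf subrr.
by elim: y P => [|a y IH] P //=; rewrite IH Hf.
Qed.

Lemma hdB (P1 P2 : seq G -> V) y :
  hd (fun z => P1 z - P2 z) y = hd P1 y - hd P2 y.
Proof.
elim: y P1 P2 => [|a y IH] P1 P2 /=; first by rewrite subrr.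
rewrite (IH (fun z => P1 (a :: z)) (fun z => P2 (a :: z))).
exact: zid1.
Qed.

Lemma hdD (P1 P2 : seq G -> V) y :
  hd (fun z => P1 z + P2 z) y = hd P1 y + hd P2 y.
Proof.
have := hdB P1 (fun z => - P2 z) y.
have -> : (fun z => P1 z - - P2 z) = (fun z => P1 z + P2 z).
  by apply: boolp.funext => z; rewrite opprK.
move=> ->; rewrite (@hd_lin V (fun v => - v)) ?opprK // => a b; by rewrite opprB addrC opprK.
Qed.

Lemma TB eta (P1 P2 : seq G -> V) y :
  T eta (fun z => P1 z - P2 z) y = T eta P1 y - T eta P2 y.
Proof.
elim: y P1 P2 => [|a y IH] P1 P2 /=; first by rewrite subrr.
rewrite (IH (fun z => P1 (eta a :: z)) (fun z => P2 (eta a :: z))).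
exact: zid1.
Qed.

Lemma hd_map (f : G -> G) (P : seq G -> V) y :
  hd (fun z => P (map f z)) y = hd P (map f y).
Proof.
elim: y P => [|a y IH] P //=.
by rewrite -(IH (fun z => P (f a :: z))).
Qed.

Lemma prism eta (P : seq G -> V) y :
  hd (T eta P) y + T eta (hd P) y = P y - P (map eta y).
Proof.
elim: y P => [|a y IH] P /=; first by rewrite subrr addr0.
set Pe := fun z => P (eta a :: z).
have E1 : hd (fun z => T eta P (a :: z)) y
        = hd (fun z => P (eta a :: a :: z)) y - hd (T eta Pe) y.
  by rewrite -hdB.
have E2 : T eta (fun z => hd P (eta a :: z)) y = T eta P y - T eta (hd Pe) y.
  by rewrite -TB.
rewrite E1 E2.
have E3 : hd (fun z => P (eta a :: z)) (a :: y)
   = P (eta a :: y) - hd (fun z => P (eta a :: a :: z)) y by [].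

have := IH Pe; rewrite /Pe => IH'.
exact: zid2.
Qed.


Lemma T_vanish eta n (P : seq G -> V) :
  (forall z, size z = n.+1 -> P z = 0) ->
  forall y, size y = n -> T eta P y = 0.
Proof.
elim: n P => [|n IH] P HP [|a y] //= [Hy].
rewrite HP /=; last by rewrite Hy.
rewrite (IH (fun z => P (eta a :: z))) ?subrr // => z Hz.
by apply: HP => /=; rewrite Hz.
Qed.

Lemma T_equiv (W : zmodType) eta (h : G) (fh : V -> W) (P1 : seq G -> W) (P2 : seq G -> V) :
  (forall a b, fh (a - b) = fh a - fh b) ->
  (forall x, eta (gmul h x) = gmul h (eta x)) ->
  (forall z, z <> [::] -> P1 (map (gmul h) z) = fh (P2 z)) ->
  forall y, T eta P1 (map (gmul h) y) = fh (T eta P2 y).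
Proof.
move=> Hf Heta.
have f0 : fh 0 = 0 by rewrite -(subrr 0) Hf subrr.
move=> HP y; elim: y P1 P2 HP => [|a y IH] P1 P2 HP //=.
rewrite Hf Heta.
rewrite -(HP (eta a :: a :: y)) //.
rewrite (IH (fun z => P1 (gmul h (eta a) :: z)) (fun z => P2 (eta a :: z))) //.
by move=> z _; rewrite -(HP (eta a :: z)).
Qed.
End Z.

Section L.
Variables (R : pzRingType) (V : lmodType R).

Lemma hd_sum (P : seq G -> V) y :
  hd P y = \sum_(i < size y) (-1) ^+ i *: P (del i y).
Proof.
elim: y P => [|a y IH] P /=; first by rewrite big_ord0.
rewrite big_ord_recl /= expr0 scale1r /del /= drop0 IH.
congr (_ + _); rewrite -sumrN; apply: eq_bigr => i _.
by rewrite /bump /= add1n exprS mulN1r scaleNr.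
Qed.

Lemma K0 (P : seq G -> V) x g t :
  hd P (pp x (g :: t)) =
  P (pp (gmul x g) t)
  + \sum_(i < size t) (-1) ^+ i.+1 *: P (pp x (merge_at i (g :: t)))
  + (-1) ^+ (size t).+1 *: P (pp x (take (size t) (g :: t))).
Proof.
rewrite hd_sum size_pp /= big_ord_recl expr0 scale1r del0_pp big_ord_recr /= addrA.
congr (_ + _ + _).
- apply: eq_bigr => i _; rewrite /bump /= add1n.
  have := @del_pp_merge _ i (g :: t) x; rewrite /= ltnS => -> //.
- rewrite /bump leq0n add1n.
  by have := @del_pp_last _ (g :: t) x (fun E => ltac:(discriminate E)) => /= ->.
Qed.

Lemma hd_cons (W : zmodType) (P : seq G -> W) a y : hd P (a :: y) = P y - hd (fun z => P (a :: z)) y.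
Proof. by []. Qed.

Lemma leibniz q (A : seq G -> R) (B : seq G -> V) y : (q.+1 < size y)%N ->
  hd (fun z => A (take q.+1 z) *: B (drop q z)) y
  = hd A (take q.+2 y) *: B (drop q.+1 y) + (-1) ^+ q *: (A (take q.+1 y) *: hd B (drop q y)).
Proof.
elim: q A B y => [|q IH] A B [|a [|b y]] // Hs.
  have E : hd (fun z => A (take 1 (a :: z)) *: B (drop 0 (a :: z))) (b :: y)
         = A [::a] *: hd (fun z => B (a::z)) (b :: y).
    rewrite -(@hd_lin _ _ (fun v => A [::a] *: v) (fun z => B (a::z))).
      by congr hd; apply: boolp.funext => z /=; rewrite take0.
    by move=> u v; exact: scalerBr.
  rewrite hd_cons E.
  set HBa := hd (fun z => B (a :: z)) (b :: y).
  rewrite [hd B _]hd_cons -/HBa.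
  clear E; clearbody HBa.
  rewrite /= ?take0 ?drop0 expr0 scale1r /= subr0 scalerBl scalerBr.
  by rewrite addrA addrNK.
rewrite hd_cons.
have E := IH (fun w => A (a :: w)) B (b :: y) Hs.
transitivity (A (take q.+2 (b :: y)) *: B (drop q.+1 (b :: y))
   - hd (fun z => A (a :: take q.+1 z) *: B (drop q z)) (b :: y)); first by [].
rewrite E.
transitivity ((A (take q.+2 (b :: y)) - hd (fun w => A (a :: w)) (take q.+2 (b :: y)))
   *: B (drop q.+1 (b :: y))
   + (-1) ^+ q.+1 *: (A (a :: take q.+1 (b :: y)) *: hd B (drop q (b :: y)))); last by [].
move: (A (take q.+2 (b :: y))) (hd (fun w => A (a :: w)) (take q.+2 (b :: y)))
  (B (drop q.+1 (b :: y))) (A (a :: take q.+1 (b :: y)) *: hd B (drop q (b :: y))) => X1 X2 X3 X4.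
by rewrite scalerBl exprS mulN1r scaleNr opprD addrA.
Qed.
End L.
End Homog.


Section Main.
Variables (R : comPzRingType) (G : group) (H : G -> Prop).
Hypothesis Hsub : is_subgroup H.
Variables (M : lmodType R) (act : G -> M -> M).
Hypothesis Hact : is_module_action H act.

Local Notation "x ** y" := (@gmul G x y) (at level 40, left associativity).
Local Notation "x ^^-1" := (@ginv G x) (at level 3).
Local Notation e := (gone G).

Lemma H1 : H e. Proof. by case: Hsub. Qed.
Lemma HM x y : H x -> H y -> H (x ** y). Proof. by case: Hsub => _ P _; apply: P. Qed.
Lemma HV x : H x -> H (x^^-1). Proof. by case: Hsub => _ _ P; apply: P. Qed.
Lemma HMl h x : H h -> H (h ** x) -> H x.
Proof. by move=> Hh Hx; rewrite -(mulKg' h x); apply: HM => //; apply: HV. Qed.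

Definition cls (x : G) : G -> Prop := fun r => H (x ** r^^-1).
Definition rho (x : G) : G :=
  if excluded_middle_informative (H x) then e else epsilon (inhabits e) (cls x).
Definition eta (x : G) : G := x ** (rho x)^^-1.

Lemma cls_mul h x : H h -> cls (h ** x) = cls x.
Proof.
move=> Hh; apply: funext => r; apply: propext; rewrite /cls -mulgA'; split.
  exact: HMl.
by move=> Hx; apply: HM.
Qed.

Lemma rho_mul h x : H h -> rho (h ** x) = rho x.
Proof.
move=> Hh; rewrite /rho.
destruct (excluded_middle_informative (H (h ** x))) as [A|A];
  destruct (excluded_middle_informative (H x)) as [B|B] => //.
- by case: B; apply: HMl A.
- by case: A; apply: HM.
- by rewrite cls_mul.
Qed.

Lemma eta_mul h x : H h -> eta (h ** x) = h ** eta x.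
Proof. by move=> Hh; rewrite /eta rho_mul // mulgA'. Qed.

Lemma eta_id h : H h -> eta h = h.
Proof.
move=> Hh; rewrite /eta /rho; destruct (excluded_middle_informative (H h)) as [A0|A]; last by case: A.
by rewrite inv1' mulg1'.
Qed.

Lemma eta_in x : H (eta x).
Proof.
rewrite /eta /rho; destruct (excluded_middle_informative (H x)) as [A|A].
  by rewrite inv1' mulg1'.
have : cls x (epsilon (inhabits e) (cls x)).
  by apply: epsilon_spec; exists x; rewrite /cls mulgV'; exact: H1.
done.
Qed.

Lemma actD g x y : H g -> act g (x + y) = act g x + act g y.
Proof. by move=> Hg; case: Hact => L _ _; have := L g 1 x y Hg; rewrite !scale1r. Qed.
Lemma act0 g : H g -> act g 0 = 0.
Proof. move=> Hg; have := actD 0 0 Hg; rewrite addr0 => E. by apply: (@addrI _ (act g 0)); rewrite addr0 -E. Qed.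
Lemma actZ g a x : H g -> act g (a *: x) = a *: act g x.
Proof. by move=> Hg; case: Hact => L _ _; have := L g a x 0 Hg; rewrite !addr0 act0 // addr0. Qed.
Lemma actN g x : H g -> act g (- x) = - act g x.
Proof. by move=> Hg; rewrite -scaleN1r actZ // scaleN1r. Qed.
Lemma actB g x y : H g -> act g (x - y) = act g x - act g y.
Proof. by move=> Hg; rewrite actD // actN. Qed.
Lemma act1 x : act e x = x. Proof. by case: Hact. Qed.
Lemma actM g h x : H g -> H h -> act (g ** h) x = act g (act h x).
Proof. by case: Hact => _ _ P; apply: P. Qed.
Lemma act_sum g n (F : 'I_n -> M) : H g -> act g (\sum_(i < n) F i) = \sum_(i < n) act g (F i).
Proof.
move=> Hg; elim: n F => [|n IH] F; first by rewrite !big_ord0 act0.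
by rewrite !big_ord_recr /= actD // IH.
Qed.

(* coinduced module *)
Record CoT := MkCo { cf : G -> M ; cfP : forall h x, H h -> cf (h ** x) = act h (cf x) }.

Lemma co_ext (a b : CoT) : (forall x, cf a x = cf b x) -> a = b.
Proof.
case: a b => fa Pa [fb Pb] /= E.
have E' : fa = fb by apply: functional_extensionality_dep.
subst fb; congr MkCo; apply: proof_irrelevance.
Qed.

HB.instance Definition _ := gen_eqMixin CoT.
HB.instance Definition _ := gen_choiceMixin CoT.

Definition co0 : CoT := @MkCo (fun _ => 0) (fun h x Hh => esym (act0 Hh)).
Program Definition coadd (a b : CoT) : CoT := @MkCo (fun x => cf a x + cf b x) _.
Next Obligation. by rewrite !cfP // actD. Qed.
Program Definition coopp (a : CoT) : CoT := @MkCo (fun x => - cf a x) _.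
Next Obligation. by rewrite cfP // actN. Qed.
Program Definition coscale (r : R) (a : CoT) : CoT := @MkCo (fun x => r *: cf a x) _.
Next Obligation. by rewrite cfP // actZ. Qed.

Lemma coaddA : associative coadd.
Proof. by move=> a b c; apply: co_ext => x /=; rewrite addrA. Qed.
Lemma coaddC : commutative coadd.
Proof. by move=> a b; apply: co_ext => x /=; rewrite addrC. Qed.
Lemma coadd0 : left_id co0 coadd.
Proof. by move=> a; apply: co_ext => x /=; rewrite add0r. Qed.
Lemma coaddN : left_inverse co0 coopp coadd.
Proof. by move=> a; apply: co_ext => x /=; rewrite addNr. Qed.

HB.instance Definition _ := GRing.isZmodule.Build CoT coaddA coaddC coadd0 coaddN.

Lemma coscaleA a b v : coscale a (coscale b v) = coscale (a * b) v.
Proof. by apply: co_ext => x /=; rewrite scalerA. Qed.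
Lemma coscale1 : left_id 1 coscale.
Proof. by move=> v; apply: co_ext => x /=; rewrite scale1r. Qed.
Lemma coscaleDr : right_distributive coscale +%R.
Proof. by move=> a u v; apply: co_ext => x /=; rewrite scalerDr. Qed.
Lemma coscaleDl v : {morph coscale^~ v : a b / a + b}.
Proof. by move=> a b; apply: co_ext => x /=; rewrite scalerDl. Qed.

HB.instance Definition _ := GRing.Zmodule_isLmodule.Build R CoT coscaleA coscale1 coscaleDr coscaleDl.

Definition N : lmodType R := CoT.

Lemma cfD (a b : N) x : cf (a + b) x = cf a x + cf b x. Proof. by []. Qed.
Lemma cfZ (r : R) (a : N) x : cf (r *: a) x = r *: cf a x. Proof. by []. Qed.
Lemma cf0 x : cf (0 : N) x = 0. Proof. by []. Qed.
Lemma cf_sum n (F : 'I_n -> N) x : cf (\sum_(i < n) F i) x = \sum_(i < n) cf (F i) x.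
Proof.
elim: n F => [|n IH] F; first by rewrite !big_ord0.
by rewrite !big_ord_recr cfD IH.
Qed.

Program Definition actCo (g : G) (v : N) : N := @MkCo (fun x => cf v (x ** g)) _.
Next Obligation. by rewrite -mulgA' cfP. Qed.

Lemma actCo_mod : is_module_action (@whole G) actCo.
Proof.
split.
- by move=> g a x y _; apply: co_ext.
- by move=> x; apply: co_ext => y /=; rewrite mulg1'.
- by move=> g h x _ _; apply: co_ext => y /=; rewrite mulgA'.
Qed.


Fixpoint allr (w : seq G) : Prop := if w is a :: w' then H a /\ allr w' else True.

Lemma all_inE w : all_in H w <-> allr w.
Proof.
rewrite /all_in; elim: w => [|a w IH] /=; first by split.
split.
- move=> A; split; first exact: (A 0%N).
  by apply/IH => i Hi; apply: (A i.+1).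
- by case=> Ha /IH B [|i] //= Hi; apply: B.
Qed.

Lemma allr_map_eta y : allr (map eta y).
Proof. by elim: y => //= a y IH; split => //; exact: eta_in. Qed.

Lemma allr_dif w : allr w -> allr (dif w).
Proof.
elim: w => [|a [|b w] IH] //= [Ha [Hb Hw]]; split.
  by apply: HM => //; apply: HV.
by apply: IH.
Qed.

Lemma allr_pp x s : H x -> allr s -> allr (pp x s).
Proof.
elim: s x => [|g t IH] x /= Hx; first by [].
by case=> Hg Ht; split => //; apply: IH => //; apply: HM.
Qed.

Lemma map_eta_id w : allr w -> map eta w = w.
Proof. by elim: w => //= a w IH [Ha Hw]; rewrite eta_id // IH. Qed.

Definition PhiF (F : seq G -> N) (y : seq G) : M := cf (F (dif y)) (hd0 y).

Lemma PhiF_pp F x s : PhiF F (pp x s) = cf (F s) x.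
Proof. by rewrite /PhiF dif_pp hd0_pp. Qed.

Lemma L1N (F : seq G -> N) g t x :
  cf (dcob actCo F (g :: t)) x = hd (PhiF F) (pp x (g :: t)).
Proof.
rewrite K0 !PhiF_pp /dcob !cfD cf_sum.
congr (_ + _ + _); apply: eq_bigr => i _; by rewrite PhiF_pp.
Qed.

Lemma HN (F : seq G -> N) z : (1 < size z)%N ->
  hd (PhiF F) z = cf (dcob actCo F (dif z)) (hd0 z).
Proof.
case: z => [|a [|b z]] // _.
rewrite -[in LHS](@pp_dif _ [:: a, b & z]) //.
by rewrite (L1N F (a^^-1 ** b) (dif (b :: z)) a).
Qed.

Definition Lam (g0 : seq G -> M) (w : seq G) : M := act (hd0 w) (g0 (dif w)).

Lemma Lam_pp g0 x s : Lam g0 (pp x s) = act x (g0 s).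
Proof. by rewrite /Lam dif_pp hd0_pp. Qed.

Lemma L1M (g0 : seq G -> M) g t x : H x -> allr (g :: t) ->
  act x (dcob act g0 (g :: t)) = hd (Lam g0) (pp x (g :: t)).
Proof.
move=> Hx [Hg Ht].
rewrite K0 !Lam_pp /dcob !actD // act_sum // actZ // -actM //.
congr (_ + _ + _); apply: eq_bigr => i _; by rewrite actZ // Lam_pp.
Qed.

Lemma K1 (E : seq G -> N) g t : allr (g :: t) ->
  dcob act (fun s => cf (E s) e) (g :: t) = cf (dcob actCo E (g :: t)) e.
Proof.
move=> [Hg Ht].
rewrite /dcob !cfD cf_sum.
congr (_ + _ + _).
transitivity (cf (E t) (g ** e)); first by rewrite cfP. by rewrite mulg1' /= mul1g'.
Qed.

Definition equivP (P : seq G -> M) :=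
  forall h x s, H h -> P (pp (h ** x) s) = act h (P (pp x s)).

Definition Cof (P : seq G -> M) (EP : equivP P) (s : seq G) : N :=
  @MkCo (fun x => P (pp x s)) (fun h x Hh => EP h x s Hh).

Lemma PhiF_Cof P (EP : equivP P) z : z <> [::] -> PhiF (Cof EP) z = P z.
Proof. by move=> nz; rewrite /PhiF /= pp_dif. Qed.

Lemma PhiF_equiv (F : seq G -> N) h z : H h -> z <> [::] ->
  PhiF F (map (gmul h) z) = act h (PhiF F z).
Proof. by move=> Hh nz; rewrite /PhiF dif_map hd0_map // cfP. Qed.

Lemma T_PhiF_equiv (F : seq G -> N) : equivP (T eta (PhiF F)).
Proof.
move=> h x s Hh; rewrite pp_mul.
apply: T_equiv.
- by move=> a b; apply: actB.
- by move=> u; apply: eta_mul.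
- by move=> z nz; apply: PhiF_equiv.
Qed.

Definition Lg (g0 : seq G -> M) (z : seq G) : M := Lam g0 (map eta z).

Lemma Lg_equiv g0 : equivP (Lg g0).
Proof.
move=> h x s Hh; rewrite pp_mul /Lg -map_comp.
have -> : [seq (eta \o gmul h) i | i <- pp x s] = map (gmul h) (map eta (pp x s)).
  by rewrite -map_comp; apply: eq_map => u /=; rewrite eta_mul.
have [w ->] : exists w, pp x s = x :: w by case: s => [|g t]; eexists.
rewrite /Lam dif_map [hd0 (map _ (map _ _))]/= [hd0 (map eta _)]/= actM //; exact: eta_in.
Qed.

Lemma SI j (F : seq G -> N) : (0 < j)%N -> coh_vanishes H act j ->
  cocycle (@whole G) actCo j F -> coboundary (@whole G) actCo j F.
Proof.
case: j => [|j] // _ Hvan HF.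
set f := fun s => cf (F s) e.
have Hf : cocycle H act j.+1 f.
  move=> [|g t] // Hs /all_inE Hall.
  by rewrite /f K1 // HF.
have [g0 Hg0] := Hvan f Hf.
set Phi := PhiF F.
have HPhi : forall z, size z = j.+3 -> hd Phi z = 0.
  move=> z Hz; rewrite HN ?Hz // HF //; last by rewrite size_dif Hz.
have Hmap : forall y, size y = j.+2 -> Phi (map eta y) = hd (Lg g0) y.
  move=> y Hy.
  rewrite /Lg hd_map.
  have ny : y <> [::] by move=> E; rewrite E in Hy.
  set w := map eta y.
  have nw : w <> [::] by move=> E; have := congr1 size E; rewrite size_map Hy.
  have Hw : allr w := allr_map_eta y.
  have Hd : allr (dif w) := allr_dif Hw.
  have sd : size (dif w) = j.+1 by rewrite size_dif size_map Hy.
  have H0 : H (hd0 w) by rewrite /w hd0_map //; exact: eta_in.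
  rewrite /Phi /PhiF -(mulg1' (hd0 w)) cfP //.
  rewrite -/(f (dif w)) Hg0 //; last exact/all_inE.
  case E : (dif w) sd Hd => [|g t] // _ Hd.
  by rewrite L1M // -E pp_dif.
exists (fun s => Cof (T_PhiF_equiv F) s + Cof (Lg_equiv g0) s).
move=> s Hs _; apply: co_ext => x.
case: s Hs => [|g t] // Hs.
rewrite L1N.
rewrite (@hd_ext _ _ j.+1 _ (fun z => T eta Phi z + Lg g0 z)); first last.
- by rewrite size_pp Hs.
- move=> z Hz; have nz : z <> [::] by case: z Hz.
  by rewrite /PhiF cfD -!/(PhiF _ z) !PhiF_Cof.
rewrite hdD.
have := prism eta Phi (pp x (g :: t)).
have TV : T eta (hd Phi) (pp x (g :: t)) = 0.
  apply: (@T_vanish _ _ _ j.+2); last by rewrite size_pp Hs.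
  by move=> z Hz; apply: HPhi.
rewrite TV.
rewrite Hmap ?size_pp ?Hs // addr0 => Epr.
by rewrite -(PhiF_pp F x (g :: t)) -/Phi Epr subrK.
Qed.

Lemma L1R (alpha : seq G -> R) g t x :
  dcob (@triv_act R G) alpha (g :: t) = @hd G R (fun z => alpha (dif z)) (pp x (g :: t)).
Proof.
rewrite (@K0 G R R^o (fun z => alpha (dif z))) /dcob /triv_act !dif_pp.
congr (_ + _ + _); apply: eq_bigr => i _; by rewrite dif_pp.
Qed.

Lemma PhiF_cup q (alpha : seq G -> R) (F : seq G -> N) z : (q < size z)%N ->
  PhiF (cup actCo q alpha F) z = alpha (dif (take q.+1 z)) *: PhiF F (drop q z).
Proof.
move=> Hz; rewrite /PhiF /cup -take_dif -drop_dif hd0_drop //.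
Qed.

Lemma cup_cocycle q j (alpha : seq G -> R) (F : seq G -> N) :
  cocycle (@whole G) (@triv_act R G) q alpha -> cocycle (@whole G) actCo j F ->
  cocycle (@whole G) actCo (j + q) (cup actCo q alpha F).
Proof.
move=> Ha HF [|g t] // Hs _; apply: co_ext => x.
rewrite L1N cf0.
rewrite (@hd_ext _ _ (j + q).+1 _ (fun z => alpha (dif (take q.+1 z)) *: PhiF F (drop q z))); first last.
- by rewrite size_pp Hs.
- by move=> z Hz; rewrite PhiF_cup // Hz; lia.
have Hsz : size (pp x (g :: t)) = (j + q).+2 by rewrite size_pp Hs.
rewrite (@leibniz G R M q (fun z => alpha (dif z)) (PhiF F)); last first.
  by rewrite Hsz !ltnS leq_addl.
rewrite take_pp.
have Eq1 : @hd G R (fun z => alpha (dif z)) (pp x (take q.+1 (g :: t))) = 0.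
  have : take q.+1 (g :: t) = g :: take q t by [].
  move=> ->; rewrite -L1R Ha //.
  have : size (take q.+1 (g :: t)) = q.+1.
    by rewrite size_takel // Hs; lia.
  by [].
rewrite Eq1 scale0r add0r.
rewrite HN; last by rewrite size_drop Hsz; lia.
rewrite HF ?cf0 ?scaler0 //.
by rewrite size_dif size_drop Hsz; lia.
Qed.

Lemma lift_cocycle i (f : seq G -> M) : cocycle H act i f ->
  cocycle (@whole G) actCo i (Cof (Lg_equiv f)).
Proof.
move=> Hf [|g t] // Hs _; apply: co_ext => x.
rewrite L1N cf0.
rewrite (@hd_ext _ _ i.+1 _ (Lg f)); first last.
- by rewrite size_pp Hs.
- by move=> z Hz; rewrite PhiF_Cof //; case: z Hz.
rewrite /Lg hd_map.
set w := map eta (pp x (g :: t)).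
have Hw : allr w := allr_map_eta _.
have sw : size w = i.+2 by rewrite size_map size_pp Hs.
have nw : w <> [::] by move=> E; rewrite E in sw.
have H0 : H (hd0 w) by rewrite /w hd0_map //; exact: eta_in.
rewrite -(pp_dif nw).
have Hd : allr (dif w) := allr_dif Hw.
have sd : size (dif w) = i.+1 by rewrite size_dif sw.
case E : (dif w) sd Hd => [|g' t'] // sd Hd.
rewrite -L1M // Hf ?act0 //.
exact/all_inE.
Qed.

Lemma lift_evres (f : seq G -> M) s : all_in H s -> cf (Cof (Lg_equiv f) s) e = f s.
Proof.
move=> /all_inE Hs /=.
rewrite /Lg map_eta_id; last by apply: allr_pp => //; exact: H1.
by rewrite Lam_pp act1.
Qed.

Lemma Pmain q (alpha : seq G -> R) n0 k :
  cocycle (@whole G) (@triv_act R G) q alpha -> (0 < q)%N ->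
  (forall i, (k < i)%N -> cup_iso actCo q alpha i) ->
  (forall i, (n0 < i)%N -> coh_vanishes H act i) ->
  forall m j, (n0 < j + m)%N -> (k < j)%N ->
  forall F, cocycle (@whole G) actCo j F -> coboundary (@whole G) actCo j F.
Proof.
move=> Ha Hq Hiso Hvan.
elim=> [|m IH] j Hjm Hkj F HF.
  by apply: SI => //; [exact: leq_ltn_trans Hkj | apply: Hvan; rewrite -(addn0 j)].
case: (ltnP n0 j) => Hn0.
  by apply: SI => //; [exact: leq_ltn_trans Hkj | apply: Hvan].
have [H1' _] := Hiso j Hkj.
apply: H1' => //.
apply: (IH (j + q)).
- lia.
- lia.
- exact: cup_cocycle.
Qed.

Lemma jump_main q (alpha : seq G -> R) n0 k :
  cocycle (@whole G) (@triv_act R G) q alpha -> (0 < q)%N ->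
  (forall i, (k < i)%N -> cup_iso actCo q alpha i) ->
  (forall i, (n0 < i)%N -> coh_vanishes H act i) ->
  forall i, (k < i)%N -> coh_vanishes H act i.
Proof.
move=> Ha Hq Hiso Hvan i Hki f Hf.
have HL := lift_cocycle Hf.
have := Pmain Ha Hq Hiso Hvan (m := n0.+1) (j := i) _ Hki HL.
case: i Hki Hf HL => [|i] // Hki Hf HL.
move=> /(_ _) [].
  lia.
move=> E HE; exists (fun s => cf (E s) e) => s Hs Hall.
rewrite -lift_evres // HE //.
case: s Hs Hall => [|g t] // Hs Hall.
by rewrite K1 //; exact/all_inE.
Qed.

End Main.

Theorem lemma2p7 (R : comPzRingType) (G : group) (k : nat) :
  periodic_from R G k.+1 -> jump_height R G k.
Proof.
move=> [q [alpha [Hq [Ha Hper]]]] H Hsub [n0 Hcd] M act Hact.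
apply: (@jump_main R G H Hsub M act Hact q alpha n0 k Ha Hq).
- by move=> i Hi; apply: Hper => //; exact: actCo_mod.
- by move=> i Hi; apply: Hcd.
Qed.
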